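(* Fix a prompt $x$ and integers $n\ge k\ge 2$. Assume the law of $R(x,y)$ under $y\sim\pi_\theta(\cdot|x)$ has no atoms (so the rewards of independent samples are almost surely pairwise distinct). Let $y^1,\dots,y^n$ be i.i.d. samples from $\pi_\theta(\cdot|x)$, relabeled so that $R(x,y^1)<R(x,y^2)<\dots<R(x,y^n)$. Define $$\hat G=\frac{k}{n}\sum_{i=1}^n\left[R(x,y^i)\frac{\binom{i-1}{k-1}}{\binom{n-1}{k-1}}-\frac{k-1}{n-1}\sum_{j=1}^{i-1}R(x,y^j)\frac{\binom{j-1}{k-2}}{\binom{n-2}{k-2}}\right]\nabla_\theta\log\pi_\theta(y^i\mid x).$$ Then more precisely $$\mathbb{E}\Big[\tfrac1n\sum_{i=1}^n R(x,y^i)\tfrac{\binom{i-1}{k-1}}{\binom{n-1}{k-1}}\nabla_\theta\log\pi_\theta(y^i|x)\Big]=\mathbb{E}_{y}\big[R(x,y)P_{\le,\theta}(y)^{k-1}\nabla_\theta\log\pi_\theta(y|x)\big],$$ $$\mathbb{E}\Big[\tfrac1n\sum_{i=1}^n\tfrac{k-1}{n-1}\sum_{j=1}^{i-1}R(x,y^j)\tfrac{\binom{j-1}{k-2}}{\binom{n-2}{k-2}}\nabla_\theta\log\pi_\theta(y^i|x)\Big]=\mathbb{E}_{y}\big[(k-1)g(y)\nabla_\theta\log\pi_\theta(y|x)\big],$$ and hence $$\mathbb{E}[\hat G]=k\,\mathbb{E}_{y\sim\pi_\theta(\cdot|x)}\Big[\big(R(x,y)P_{\le,\theta}(y)^{k-1}-(k-1)g(y)\big)\nabla_\theta\log\pi_\theta(y\mid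 x)\Big].$$
   Context: $\pi_\theta(\cdot\mid x)$ is a probability distribution on a measurable response space, with density $\pi_\theta(y\mid x)$ with respect to a fixed $\sigma$-finite measure, differentiable in $\theta$; $R(x,y)$ is a bounded real-valued reward, and all expectations involved are assumed finite. For a response $y$, $P_{\le,\theta}(y)=\Pr_{y'\sim\pi_\theta(\cdot|x)}[R(x,y')\le R(x,y)]$, and $g(y)=\mathbb{E}_{y'\sim\pi_\theta(\cdot|x)}\big[R(x,y')\,P_{\le,\theta}(y')^{k-2}\,\mathbf 1\{R(x,y')<R(x,y)\}\big]$. Binomial coefficients use $\binom{p}{q}=0$ for $q>p$ or $q<0$. *)

(* Defs.v *)
From HB Require Import structures.
From mathcomp Require Import all_boot all_order all_algebra.
From mathcomp Require Import all_classical all_reals all_analysis.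
Set Implicit Arguments. Unset Strict Implicit. Unset Printing Implicit Defensive.
Import Order.TTheory GRing.Theory Num.Theory.
Import numFieldNormedType.Exports.
Local Open Scope classical_set_scope.
Local Open Scope ring_scope.

Section Defs.
Context {R : realType} {d : measure_display} {Y : measurableType d}.
Variable mu : {measure set Y -> \bar R}.

Definition Ep (p : Y -> R) (f : Y -> R) : R :=
  \int[mu]_(y in setT) (p y * f y).

Definition Ple (p : Y -> R) (rew : Y -> R) (y : Y) : R :=
  Ep p (fun y' => ((rew y' <= rew y)%R)%:R).

Definition gfun (p : Y -> R) (rew : Y -> R) (k : nat) (y : Y) : R :=
  Ep p (fun y' => rew y' * Ple p rew y' ^+ (k - 2) * ((rew y' < rew y)%R)%:R).

(* Expectation of F(y^1,...,y^n) for y^1..y^n i.i.d. with density p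
   (iterated integral = integral against the n-fold product law). *)
Fixpoint iidE (p : Y -> R) (n : nat) (F : seq Y -> R) : R :=
  match n with
  | 0 => F [::]
  | m.+1 => Ep p (fun y => iidE p m (fun s => F (y :: s)))
  end.

End Defs.

Definition score {R : realType} {Y : Type} {m : nat}
  (pi : 'rV[R]_m -> Y -> R) (theta : 'rV[R]_m) (j : 'I_m) (y : Y) : R :=
  'D_(delta_mx 0 j) (fun t => ln (pi t y)) theta.

Section Estimator.
Context {R : realType} {Y : Type}.
Variables (rew : Y -> R) (sc : Y -> R) (n k : nat).

(* number of samples in s with reward strictly below that of y;
   for the sorted relabeling this is  i-1  when y = y^i *)
Definition below (s : seq Y) (y : Y) : nat := count (fun y' => rew y' < rew y) s.

Definition term1 (s : seq Y) : R :=
  n%:R^-1 * \sum_(yi <- s)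
     rew yi * ('C(below s yi, k - 1))%:R / ('C(n - 1, k - 1))%:R * sc yi.

Definition term2 (s : seq Y) : R :=
  n%:R^-1 * \sum_(yi <- s)
     ((k - 1)%:R / (n - 1)%:R *
        \sum_(yj <- s | rew yj < rew yi)
           rew yj * ('C(below s yj, k - 2))%:R / ('C(n - 2, k - 2))%:R) * sc yi.

Definition Ghat (s : seq Y) : R :=
  k%:R / n%:R * \sum_(yi <- s)
     (rew yi * ('C(below s yi, k - 1))%:R / ('C(n - 1, k - 1))%:R
      - (k - 1)%:R / (n - 1)%:R *
        \sum_(yj <- s | rew yj < rew yi)
           rew yj * ('C(below s yj, k - 2))%:R / ('C(n - 2, k - 2))%:R) * sc yi.

End Estimator.

(* Main.v *)
Require Import Defs.
From HB Require Import structures.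
From mathcomp Require Import all_boot all_order all_algebra.
From mathcomp Require Import all_classical all_reals all_analysis.
From mathcomp Require Import measurable_realfun.
From mathcomp Require Import ring lra.
Import Order.TTheory GRing.Theory Num.Theory.
Import numFieldNormedType.Exports.
Local Open Scope classical_set_scope.
Local Open Scope ring_scope.
Set Implicit Arguments. Unset Strict Implicit.
Section Main.
Context {R : realType} {d : measure_display} {Y : measurableType d}.
Variable mu : {measure set Y -> \bar R}.
Hypothesis hsf : sigma_finite setT mu.
Variable P : Y -> R.
Hypothesis P0 : forall y, 0 <= P y.
Hypothesis mP : measurable_fun setT P.
Hypothesis P1 : (\int[mu]_(y in setT) (P y)%:E = 1)%E.

Definition muS : {sigma_finite_measure set Y -> \bar R} :=
  HB.pack (mu : set Y -> \bar R) mu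
   (isSFinite.Build _ _ _ mu (sfinite_measure_sigma_finite hsf))
   (isSigmaFinite.Build _ _ _ mu hsf).

Definition good (f : Y -> R) := measurable_fun setT f /\
  mu.-integrable setT (fun y => (P y * f y)%:E).
Definition bm (f : Y -> R) := measurable_fun setT f /\
  exists B, forall y, `|f y| <= B.

Local Notation E := (Ep mu P).

Lemma intP : mu.-integrable setT (fun y => (P y)%:E).
Proof.
apply/integrableP; split; first exact/measurable_EFinP.
under eq_integral do rewrite /= ger0_norm //.
by rewrite P1 ltry.
Qed.

Lemma bm_bounded f : bm f -> [bounded f x | x in setT].
Proof.
move=> [_ [B hB]]; exists B; split; first exact: num_real.
move=> x Bx y _; exact: le_trans (hB y) (ltW Bx).
Qed.

Lemma bm_good f : bm f -> good f.
Proof.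
move=> bf; split; first by case: bf.
have := integrableMr measurableT (proj1 bf) (bm_bounded bf) intP.
apply: (eq_integrable measurableT) => y _ /=; by rewrite -EFinM mulrC.
Qed.

Lemma good_add f g : good f -> good g -> good (fun y => f y + g y).
Proof.
move=> [mf If] [mg Ig]; split; first exact: measurable_funD.
have := integrableD measurableT If Ig.
by apply: (eq_integrable measurableT) => y _ /=; rewrite -EFinD mulrDr.
Qed.

Lemma good_bmul g f : bm g -> good f -> good (fun y => g y * f y).
Proof.
move=> bg [mf If]; split; first by apply: measurable_funM => //; case: bg.
have := integrableMr measurableT (proj1 bg) (bm_bounded bg) If.
by apply: (eq_integrable measurableT) => y _ /=; rewrite -EFinM mulrCA.
Qed.

Lemma bm_cst c : bm (fun _ => c).
Proof. by split => //; exists `|c|. Qed.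

Lemma bm_add f g : bm f -> bm g -> bm (fun y => f y + g y).
Proof.
move=> [mf [B hB]] [mg [C hC]]; split; first exact: measurable_funD.
exists (B + C) => y; apply: le_trans (ler_normD _ _) _; exact: lerD.
Qed.

Lemma bm_mul f g : bm f -> bm g -> bm (fun y => f y * g y).
Proof.
move=> [mf [B hB]] [mg [C hC]]; split; first exact: measurable_funM.
exists (B * C) => y; rewrite normrM; apply: ler_pM => //.
Qed.

Lemma good_cmul c f : good f -> good (fun y => c * f y).
Proof. by move=> gf; apply: good_bmul => //; exact: bm_cst. Qed.

Lemma bm_cmul c f : bm f -> bm (fun y => c * f y).
Proof. by move=> gf; apply: bm_mul => //; exact: bm_cst. Qed.

Lemma bm_sum (I : Type) (s : seq I) (F : I -> Y -> R) :
  (forall i, bm (F i)) -> bm (fun y => \sum_(i <- s) F i y).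
Proof.
move=> hF; elim: s => [|i s IH].
  under [X in bm X]eq_fun do rewrite big_nil; exact: bm_cst.
under [X in bm X]eq_fun do rewrite big_cons; exact: bm_add.
Qed.

Lemma good_sum (I : Type) (s : seq I) (F : I -> Y -> R) :
  (forall i, good (F i)) -> good (fun y => \sum_(i <- s) F i y).
Proof.
move=> hF; elim: s => [|i s IH].
  under [X in good X]eq_fun do rewrite big_nil; exact/bm_good/bm_cst.
under [X in good X]eq_fun do rewrite big_cons; exact: good_add.
Qed.

Lemma E_add f g : good f -> good g -> E (fun y => f y + g y) = E f + E g.
Proof.
move=> [_ If] [_ Ig]; rewrite /Ep -RintegralD //.
by apply: eq_Rintegral => y _; rewrite mulrDr.
Qed.

Lemma E_cmul c f : good f -> E (fun y => c * f y) = c * E f.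
Proof.
move=> [_ If]; rewrite /Ep -RintegralZl //.
by apply: eq_Rintegral => y _; rewrite mulrCA.
Qed.

Lemma E_cst c : E (fun _ => c) = c.
Proof.
rewrite /Ep; under eq_Rintegral do rewrite mulrC.
rewrite RintegralZl //; last exact: intP.
by rewrite /Rintegral P1 /= mulr1.
Qed.

Lemma E_sum (I : Type) (s : seq I) (F : I -> Y -> R) :
  (forall i, good (F i)) -> E (fun y => \sum_(i <- s) F i y) = \sum_(i <- s) E (F i).
Proof.
move=> hF; elim: s => [|i s IH].
  under eq_fun do rewrite big_nil; by rewrite E_cst big_nil.
under eq_fun do rewrite big_cons; rewrite E_add //; last exact: good_sum.
by rewrite IH big_cons.
Qed.

Lemma E_ext f g : (forall y, f y = g y) -> E f = E g.
Proof. by move=> h; congr Ep; apply/funext. Qed.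


Lemma muS_int D (f : Y -> \bar R) : (\int[muS]_(x in D) f x = \int[mu]_(x in D) f x)%E.
Proof. reflexivity. Qed.

Definition pm (h : Y -> Y -> R) :=
  measurable_fun setT (fun p : Y * Y => h p.1 p.2) /\ (forall a b, `|h a b| <= 1).

Lemma pm_bm1 h a : pm h -> bm (h a).
Proof.
move=> [mh hb]; split; last by exists 1.
exact: (measurable_fun_pair2 a mh).
Qed.

Lemma pm_bm2 h b : pm h -> bm (fun a => h a b).
Proof.
move=> [mh hb]; split; last by exists 1 => a.
exact: (measurable_fun_pair1 b mh).
Qed.

Lemma good_int f : good f -> mu.-integrable setT (EFin \o (fun y => P y * f y)).
Proof. by case. Qed.

Lemma good_abs f : good f -> good (fun y => `|f y|).
Proof.
move=> [mf If]; split; first exact: measurableT_comp.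
have := integrable_norm If; apply: (eq_integrable measurableT) => y _ /=.
by rewrite normrM ger0_norm.
Qed.

Lemma E_abs_le f : good f -> `|E f| <= Ep mu P (fun y => `|f y|).
Proof.
move=> gf; rewrite /Ep; have h1 := le_normr_Rintegral measurableT (good_int gf).
apply: (le_trans h1).
apply: le_Rintegral => //.
- have := integrable_norm (good_int gf); apply: (eq_integrable measurableT) => y _ //.
- exact: (good_int (good_abs gf)).
- by move=> y _; rewrite normrM (ger0_norm (P0 y)).
Qed.

Lemma E_mono f g : good f -> good g -> (forall y, f y <= g y) -> E f <= E g.
Proof.
move=> gf gg fg; rewrite /Ep; apply: le_Rintegral => //; [exact: good_int|exact: good_int|].
by move=> y _; rewrite ler_wpM2l.
Qed.

Lemma meas_prod h f : pm h -> measurable_fun setT f ->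
  measurable_fun setT (fun p : Y * Y => (P p.2 * (h p.1 p.2 * f p.2))%:E).
Proof.
move=> [mh _] mf; apply/measurable_EFinP; apply: measurable_funM.
  exact: measurableT_comp mP measurable_snd.
apply: measurable_funM => //; exact: measurableT_comp mf measurable_snd.
Qed.

Lemma partial_bm h f : pm h -> good f -> bm (fun y => E (fun z => h y z * f z)).
Proof.
move=> ph gf; split; last first.
  exists (E (fun y => `|f y|)) => y.
  apply: le_trans (E_abs_le _) _; first exact: good_bmul (pm_bm1 y ph) gf.
  apply: E_mono; [exact/good_abs/good_bmul/gf/pm_bm1|exact: good_abs|].
  move=> z; rewrite normrM; apply: ler_piMl => //; exact: (proj2 ph).
pose F := fun p : Y * Y => (P p.2 * (h p.1 p.2 * f p.2))%:E.
have mF : measurable_fun setT F by apply: meas_prod => //; case: gf.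
have -> : (fun y => E (fun z => h y z * f z)) =
   fine \o (fubini_F muS (F^\+) \- fubini_F muS (F^\-))%E.
  apply/funext => y; rewrite /Ep /Rintegral /= /fubini_F.
  rewrite !muS_int; congr fine; rewrite [LHS]integralE.
  have e1 : (\int[muS]_y0 F^\+ (y, y0) = \int[mu]_y0 F^\+ (y, y0))%E by exact: muS_int.
  have e2 : (\int[muS]_y0 F^\- (y, y0) = \int[mu]_y0 F^\- (y, y0))%E by exact: muS_int.
  rewrite e1 e2; congr (_ - _)%E; apply: eq_integral => x _; by rewrite ?funeposE ?funenegE.
apply: measurableT_comp; first exact: fine_measurable.
apply: emeasurable_funB.
  by apply: measurable_fun_fubini_tonelli_F => //; exact: measurable_funepos.
by apply: measurable_fun_fubini_tonelli_F => //; exact: measurable_funeneg.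
Qed.

Lemma int_slice (c : R) f : mu.-integrable setT (fun y => (P y * f y)%:E) ->
  (\int[mu]_y (c * (P y * f y))%:E = (c * E f)%:E)%E.
Proof.
move=> If.
under eq_integral do rewrite EFinM.
rewrite integralZl // /Ep /Rintegral EFinM fineK //.
exact: integrable_fin_num If.
Qed.

Lemma swap h f g : pm h -> good f -> good g ->
  E (fun a => g a * E (fun b => h a b * f b)) =
  E (fun b => f b * E (fun a => h a b * g a)).
Proof.
move=> ph gf gg.
pose F := fun p : Y * Y => (P p.1 * g p.1 * (P p.2 * (h p.1 p.2 * f p.2)))%:E.
have mF : measurable_fun setT F.
  apply/measurable_EFinP; apply: measurable_funM.
    apply: measurable_funM; [exact: measurableT_comp mP measurable_fst|].
    exact: measurableT_comp (proj1 gg) measurable_fst.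
  apply/measurable_EFinP; apply: meas_prod => //; exact: (proj1 gf).
have iF : (muS \x muS)%E.-integrable setT F.
  apply/(integrable12ltyP muS muS mF).
  pose C := (\int[mu]_y `|(P y * f y)%:E|)%E.
  have C0 : (0 <= C)%E by exact: integral_ge0.
  have Cfin : C \is a fin_num.
    rewrite ge0_fin_numE //; by case/integrableP: (proj2 gf).
  apply: (@le_lt_trans _ _ (\int[mu]_x (`|(P x * g x)%:E| * C))%E).
    rewrite muS_int; apply: ge0_le_integral => //.
    - by move=> x _; exact: integral_ge0.
    - have mA : measurable_fun setT (fun x => \int[muS]_y `|F (x,y)|)%E.
        apply: (measurable_fun_fubini_tonelli_F (abse \o F)).
          exact: measurableT_comp.
        by move=> ?; exact: abse_ge0.
      exact: mA.
    - apply: emeasurable_funM => //; apply: measurableT_comp => //.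
      apply/measurable_EFinP; apply: measurable_funM => //; exact: (proj1 gg).
    - move=> x _; rewrite muS_int /C -ge0_integralZl //; last first.
        by apply: measurableT_comp => //; apply/measurable_EFinP;
          apply: measurable_funM => //; exact: (proj1 gf).
      apply: ge0_le_integral => //.
      + apply: measurableT_comp => //; exact: (measurable_fun_pair2 x mF).
      + apply: emeasurable_funM => //; apply: measurableT_comp => //.
        apply/measurable_EFinP; apply: measurable_funM => //; exact: (proj1 gf).
      + move=> y _; rewrite /F /= -EFinM !normrM lee_fin.
        rewrite -!mulrA; apply: ler_wpM2l => //; apply: ler_wpM2l => //.
        apply: ler_wpM2l => //; by rewrite ler_piMl // (proj2 ph).
  rewrite ge0_integralZr //; last first.
    apply: measurableT_comp => //; apply/measurable_EFinP.
    apply: measurable_funM => //; exact: (proj1 gg).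
  rewrite muleC; apply: lte_mul_pinfty => //.
  by case/integrableP: (proj2 gg).
have := Fubini iF; rewrite !muS_int.
have e1 : forall a, (\int[mu]_b F (a, b) =
   (P a * (g a * E (fun b => h a b * f b)))%:E)%E.
  move=> a; rewrite /F /=.
  rewrite (int_slice (P a * g a) (f := fun b => h a b * f b)); last first.
    exact: (proj2 (good_bmul (pm_bm1 a ph) gf)).
  by rewrite mulrA.
have e2 : forall b, (\int[mu]_a F (a, b) =
   (P b * (f b * E (fun a => h a b * g a)))%:E)%E.
  move=> b; rewrite /F /=.
  transitivity (\int[mu]_a ((P b * f b) * (P a * (h a b * g a)))%:E)%E.
    by apply: eq_integral => a _; congr EFin; ring.
  rewrite (int_slice (P b * f b) (f := fun a => h a b * g a)); last first.
    exact: (proj2 (good_bmul (pm_bm2 b ph) gg)).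
  by rewrite mulrA.
under eq_integral do rewrite e1.
under [X in _ = X -> _]eq_integral do rewrite e2.
by rewrite /Ep /Rintegral => ->.
Qed.

Lemma bnat_meas d' (T : measurableType d') (b : T -> bool) :
  measurable_fun setT b -> measurable_fun setT (fun z => ((b z : nat)%:R : R)).
Proof.
move=> mb.
have -> : (fun z => ((b z : nat)%:R : R)) = (fun z => if b z then 1 else 0).
  by apply/funext => z; case: (b z).
exact: measurable_fun_ifT.
Qed.

Lemma split_bool (V : nat -> R) (b : bool) : V b = V 0%N + (b : nat)%:R * (V 1%N - V 0%N).
Proof. by case: b => /=; rewrite ?mul1r ?mul0r ?addr0 // addrC subrK. Qed.

Variable r : Y -> R.
Hypothesis mr : measurable_fun setT r.

Definition ind (a b : Y) : R := (((r a < r b)%R : bool) : nat)%:R.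

Lemma pm_ind : pm ind.
Proof.
split; last by move=> a b; rewrite /ind; case: (r a < r b); rewrite ?normr1 ?normr0.
apply: bnat_meas; apply: measurable_fun_ltr.
  exact: measurableT_comp mr measurable_fst.
exact: measurableT_comp mr measurable_snd.
Qed.

Lemma pm_indT : pm (fun a b => ind b a).
Proof.
split; last by move=> a b; rewrite /ind; case: (r b < r a); rewrite ?normr1 ?normr0.
apply: bnat_meas; apply: measurable_fun_ltr.
  exact: measurableT_comp mr measurable_snd.
exact: measurableT_comp mr measurable_fst.
Qed.

Definition q (y : Y) := E (fun z => ind z y).

Lemma bm_q : bm q.
Proof.
have := partial_bm pm_indT (bm_good (bm_cst 1)).
have -> : (fun y => E (fun z => ind z y * 1)) = q.
  by apply/funext => y; rewrite /q; congr Ep; apply/funext => z; rewrite mulr1.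
by [].
Qed.

Lemma bm_ind1 x : bm (fun y => ind y x).
Proof. exact: (pm_bm2 x pm_ind). Qed.

Lemma bm_ind2 x : bm (fun y => ind x y).
Proof. exact: (pm_bm1 x pm_ind). Qed.

Lemma E_indV x (V : nat -> R) :
  E (fun y => V ((r y < r x)%R : bool)) = q x * V 1%N + (1 - q x) * V 0%N.
Proof.
under E_ext do rewrite split_bool.
rewrite E_add; [|exact/bm_good/bm_cst|].
  rewrite E_cst (E_ext (g := fun y => (V 1%N - V 0%N) * ind y x)); last first.
    by move=> y; rewrite mulrC.
  rewrite E_cmul; last exact/bm_good/bm_ind1.
  rewrite /q; ring.
under [X in good X]eq_fun do rewrite mulrC.
exact/bm_good/bm_cmul/bm_ind1.
Qed.

Lemma swapW (W : Y -> nat -> R) : good (W^~ 0%N) -> good (W^~ 1%N) ->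
  bm (fun y => E (fun z => W z ((r y < r z)%R : bool))) /\
  E (fun y => E (fun z => W z ((r y < r z)%R : bool))) =
    E (fun z => q z * W z 1%N + (1 - q z) * W z 0%N).
Proof.
move=> g0 g1.
have gD : good (fun z => W z 1%N - W z 0%N).
  apply: good_add => //; under [X in good X]eq_fun do rewrite -mulN1r.
  exact: good_cmul.
have e1 : forall y, E (fun z => W z ((r y < r z)%R : bool)) =
   E (W^~ 0%N) + E (fun z => ind y z * (W z 1%N - W z 0%N)).
  move=> y; under E_ext do rewrite split_bool.
  rewrite E_add //; exact: good_bmul (bm_ind2 y) gD.
have bP := partial_bm pm_ind gD.
split.
  under [X in bm X]eq_fun do rewrite e1.
  exact: bm_add (bm_cst _) bP.
under E_ext do rewrite e1.
rewrite E_add; [|exact/bm_good/bm_cst|exact: bm_good].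
rewrite E_cst.
rewrite [X in _ + X = _](E_ext (g := fun y => 1 * E (fun z => ind y z * (W z 1%N - W z 0%N))));
  last by move=> y; rewrite mul1r.
rewrite (swap pm_ind gD (bm_good (bm_cst 1))).
rewrite [RHS](E_ext (g := fun z => W z 0%N + q z * (W z 1%N - W z 0%N))); last first.
  by move=> z; rewrite /q; ring.
rewrite E_add //; last exact: good_bmul bm_q gD.
congr (_ + _); apply: E_ext => z; rewrite mulrC /q; congr (_ * _).
by apply: E_ext => y; rewrite mulr1.
Qed.

Fixpoint Bin (m : nat) (p : R) (f : nat -> R) : R :=
  match m with
  | 0 => f 0%N
  | m'.+1 => p * Bin m' p (fun c => f c.+1) + (1 - p) * Bin m' p f
  end.

Lemma Bin_ext m p f g : (forall c, f c = g c) -> Bin m p f = Bin m p g.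
Proof.
elim: m f g => [|m IH] f g fg /=; first exact: fg.
by rewrite (IH _ (fun c => g c.+1)) // (IH f g).
Qed.

Lemma Bin_cst m p a : Bin m p (fun _ => a) = a.
Proof. by elim: m => [|m IH] //=; rewrite IH; ring. Qed.

Lemma Bin_add m p f g : Bin m p (fun c => f c + g c) = Bin m p f + Bin m p g.
Proof.
elim: m f g => [|m IH] f g //=.
rewrite (IH (fun c => f c.+1) (fun c => g c.+1)) IH; ring.
Qed.

Lemma Bin_scale m p a f : Bin m p (fun c => a * f c) = a * Bin m p f.
Proof.
elim: m f => [|m IH] f //=.
rewrite (IH (fun c => f c.+1)) IH; ring.
Qed.

Lemma Bin_moment N p j : Bin N p (fun c => ('C(c, j))%:R) = ('C(N, j))%:R * p ^+ j.
Proof.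
elim: N j => [|N IH] j.
  by case: j => [|j] /=; rewrite ?bin0 ?expr0 ?mulr1 // bin0n mul0r.
case: j => [|j] /=.
  rewrite (@Bin_ext _ _ (fun c => ('C(c.+1,0))%:R) (fun c => ('C(c,0))%:R)); last by move=> c; rewrite !bin0.
  rewrite IH !bin0 expr0; ring.
rewrite (@Bin_ext _ _ _ (fun c => ('C(c, j.+1))%:R + ('C(c, j))%:R)); last first.
  by move=> c; rewrite binS natrD.
rewrite Bin_add !IH binS natrD exprS; ring.
Qed.

Lemma good_Bin m (p : Y -> R) (F : Y -> nat -> R) : bm p ->
  (forall c, good (F^~ c)) -> good (fun y => Bin m (p y) (F y)).
Proof.
move=> bp; elim: m F => [|m IH] F gF /=; first exact: gF.
apply: good_add; first by apply: good_bmul bp _; exact: IH.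
apply: good_bmul; last exact: IH.
apply: bm_add; first exact: bm_cst.
under [X in bm X]eq_fun do rewrite -mulN1r; exact: bm_cmul.
Qed.

Lemma bm_Bin m (p : Y -> R) (F : Y -> nat -> R) : bm p ->
  (forall c, bm (F^~ c)) -> bm (fun y => Bin m (p y) (F y)).
Proof.
move=> bp; elim: m F => [|m IH] F gF /=; first exact: gF.
apply: bm_add; first by apply: bm_mul bp _; exact: IH.
apply: bm_mul; last exact: IH.
apply: bm_add; first exact: bm_cst.
under [X in bm X]eq_fun do rewrite -mulN1r; exact: bm_cmul.
Qed.

Lemma below_cons x t y : below r (x :: t) y = ((r x < r y)%R : nat) + below r t y.
Proof. by []. Qed.

Lemma below_rcons t x y : below r (rcons t x) y = (below r t y + ((r x < r y)%R : nat))%N.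
Proof. by rewrite /below -cats1 count_cat /= addn0. Qed.

Lemma good_bt t (F : Y -> nat -> R) : (forall c, good (F^~ c)) ->
  forall c0, good (fun y => F y (below r t y + c0)%N).
Proof.
elim: t F => [|x t IH] F gF c0 /=; first exact: gF.
have -> : (fun y => F y (below r (x :: t) y + c0)%N) =
  (fun y => F y (below r t y + c0)%N +
     ind x y * (F y (below r t y + c0.+1)%N - F y (below r t y + c0)%N)).
  apply/funext => y; rewrite below_cons.
  rewrite (split_bool (fun b => F y (b + below r t y + c0)%N)) /ind.
  by rewrite !add0n add1n addSn addnS.
apply: good_add; first exact: IH.
apply: good_bmul; first exact: bm_ind2.
apply: good_add; first exact: IH.
under [X in good X]eq_fun do rewrite -mulN1r; apply: good_cmul; exact: IH.
Qed.

Lemma bm_bt t (F : Y -> nat -> R) : (forall c, bm (F^~ c)) ->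
  forall c0, bm (fun y => F y (below r t y + c0)%N).
Proof.
elim: t F => [|x t IH] F gF c0 /=; first exact: gF.
have -> : (fun y => F y (below r (x :: t) y + c0)%N) =
  (fun y => F y (below r t y + c0)%N +
     ind x y * (F y (below r t y + c0.+1)%N - F y (below r t y + c0)%N)).
  apply/funext => y; rewrite below_cons.
  rewrite (split_bool (fun b => F y (b + below r t y + c0)%N)) /ind.
  by rewrite !add0n add1n addSn addnS.
apply: bm_add; first exact: IH.
apply: bm_mul; first exact: bm_ind2.
apply: bm_add; first exact: IH.
under [X in bm X]eq_fun do rewrite -mulN1r; apply: bm_cmul; exact: IH.
Qed.

Lemma bm_V x (V : nat -> R) : bm (fun y => V ((r y < r x)%R : bool)).
Proof.
under [X in bm X]eq_fun do rewrite split_bool.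
apply: bm_add; first exact: bm_cst.
under [X in bm X]eq_fun do rewrite mulrC; exact/bm_cmul/bm_ind1.
Qed.

Definition F1 (phi : Y -> nat -> R) (u : seq Y) : R :=
  \sum_(x <- u) phi x (below r u x).

Definition C1 (phi : Y -> nat -> R) (t : seq Y) (m : nat) : R :=
  \sum_(x <- t) Bin m (q x) (fun c => phi x (below r t x + c)%N) +
  m%:R * E (fun z => Bin m.-1 (q z) (fun c => phi z (below r t z + c)%N)).

Lemma E_Bin_ind x m (f : nat -> R) :
  E (fun y => Bin m (q x) (fun c => f (((r y < r x)%R : nat) + c)%N)) =
  Bin m.+1 (q x) f.
Proof.
rewrite (E_indV x (fun b => Bin m (q x) (fun c => f (b + c)%N))) /=.
congr (_ * _ + _ * _); apply: Bin_ext => c; by rewrite ?add1n ?add0n.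
Qed.

Lemma E_Bin_swap m (phi : Y -> nat -> R) t : (forall c, good (phi^~ c)) ->
  bm (fun y => E (fun z => Bin m (q z)
         (fun c => phi z (below r t z + (((r y < r z)%R : nat) + c))%N))) /\
  E (fun y => E (fun z => Bin m (q z)
         (fun c => phi z (below r t z + (((r y < r z)%R : nat) + c))%N))) =
  E (fun z => Bin m.+1 (q z) (fun c => phi z (below r t z + c)%N)).
Proof.
move=> gphi.
have gW : forall b : nat, good (fun z => Bin m (q z) (fun c => phi z (below r t z + (b + c))%N)).
  move=> b; apply: good_Bin; first exact: bm_q.
  move=> c; exact: (good_bt t (F := phi) gphi (b + c)%N).
have [H1 H2] := swapW (W := fun z b => Bin m (q z) (fun c => phi z (below r t z + (b + c))%N)) (gW 0%N) (gW 1%N).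
split; first exact: H1.
rewrite H2; apply: E_ext => z /=.
congr (_ * _ + _ * _); apply: Bin_ext => c; by rewrite ?add1n ?add0n.
Qed.

Lemma closed1 (phi : Y -> nat -> R) : (forall c, good (phi^~ c)) ->
  forall m t, iidE mu P m (fun s => F1 phi (t ++ s)) = C1 phi t m.
Proof.
move=> gphi; elim=> [|m IH] t.
  rewrite /= cats0 /F1 /C1 mul0r addr0; apply: eq_bigr => x _; by rewrite /= addn0.
rewrite /=.
rewrite (E_ext (g := fun y => C1 phi (rcons t y) m)); last first.
  by move=> y; rewrite -IH; congr iidE; apply/funext => s; rewrite cat_rcons.
pose A y := \sum_(x <- t) Bin m (q x)
   (fun c => phi x (below r t x + (((r y < r x)%R : nat) + c))%N).
pose B y := Bin m (q y) (fun c => phi y (below r t y + c)%N).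
pose Cf y := E (fun z => Bin m.-1 (q z)
   (fun c => phi z (below r t z + (((r y < r z)%R : nat) + c))%N)).
have eA : forall y, C1 phi (rcons t y) m = A y + B y + m%:R * Cf y.
  move=> y; rewrite /C1 big_rcons /=; congr (_ + _ + _).
  - by apply: eq_bigr => x _; apply: Bin_ext => c; rewrite below_rcons addnA.
  - by apply: Bin_ext => c; rewrite below_rcons ltxx addn0.
  - congr (_ * _); apply: E_ext => z; apply: Bin_ext => c.
    by rewrite below_rcons addnA.
have gB : good B.
  apply: good_Bin; first exact: bm_q.
  move=> c; exact: (good_bt t (F := phi) gphi c).
have bA : bm A.
  apply: bm_sum => x; exact: (bm_V x (fun b => Bin m (q x)
   (fun c => phi x (below r t x + (b + c))%N))).
have [bC eC] := E_Bin_swap m.-1 t gphi.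
rewrite (E_ext eA) E_add; last exact/bm_good/bm_cmul.
  2: exact: good_add (bm_good bA) gB.
rewrite E_add //; last exact: bm_good.
rewrite E_cmul; last exact: bm_good.
rewrite -/(Cf) in eC bC *.
rewrite eC /A /C1 /= E_sum; last first.
  move=> x; apply: bm_good; exact: (bm_V x (fun b => Bin m (q x)
   (fun c => phi x (below r t x + (b + c))%N))).
rewrite -addrA; congr (_ + _).
  apply: eq_bigr => x _.
  by rewrite (E_Bin_ind x m (fun n => phi x (below r t x + n)%N)).
rewrite /B; clear eC bC eA bA gB IH A B Cf.
case: m => [|m] /=; first by rewrite !mul0r mul1r addr0.
rewrite -natr1; ring.
Qed.

Definition G (psi : Y -> nat -> R) (s : seq Y) (m : nat) (z : Y) (b : nat) : R :=
  Bin m (q z) (fun c => psi z (below r s z + (b + c))%N).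

Lemma G_rcons psi t y m z b :
  G psi (rcons t y) m z b = G psi t m z (((r y < r z)%R : nat) + b)%N.
Proof. by apply: Bin_ext => c; rewrite below_rcons !addnA. Qed.

Lemma good_G psi t m b : (forall c, good (psi^~ c)) -> good (fun z => G psi t m z b).
Proof.
move=> gp; apply: good_Bin; first exact: bm_q.
move=> c; exact: (good_bt t (F := psi) gp (b + c)%N).
Qed.

Lemma bm_G psi t m b : (forall c, bm (psi^~ c)) -> bm (fun z => G psi t m z b).
Proof.
move=> gp; apply: bm_Bin; first exact: bm_q.
move=> c; exact: (bm_bt t (F := psi) gp (b + c)%N).
Qed.

Lemma G_S psi t m z : q z * G psi t m z 1%N + (1 - q z) * G psi t m z 0%N = G psi t m.+1 z 0%N.
Proof.
rewrite /G /=; congr (_ * _ + _ * _); apply: Bin_ext => c; by rewrite ?add1n ?add0n.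
Qed.

Lemma EG_ind psi t m x : E (fun y => G psi t m x ((r y < r x)%R : bool)) = G psi t m.+1 x 0%N.
Proof. by rewrite (E_indV x (fun b => G psi t m x b)) G_S. Qed.

Lemma bm_GV psi t m x : bm (fun y => G psi t m x ((r y < r x)%R : bool)).
Proof. exact: (bm_V x (fun b => G psi t m x b)). Qed.

Lemma EG_swap psi t m (g : Y -> R) : bm g -> (forall c, good (psi^~ c)) ->
  bm (fun y => E (fun z => g z * G psi t m z ((r y < r z)%R : bool))) /\
  E (fun y => E (fun z => g z * G psi t m z ((r y < r z)%R : bool))) =
  E (fun z => g z * G psi t m.+1 z 0%N).
Proof.
move=> bg gp.
have gW : forall b : nat, good (fun z => g z * G psi t m z b).
  by move=> b; apply: good_bmul bg (good_G _ _ _ gp).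
have [H1 H2] := swapW (W := fun z b => g z * G psi t m z b) (gW 0%N) (gW 1%N).
split; first exact: H1.
rewrite H2; apply: E_ext => z /=; rewrite -G_S; ring.
Qed.

Lemma E_mulr f c : good f -> E (fun y => f y * c) = E f * c.
Proof.
move=> gf; rewrite (E_ext (g := fun y => c * f y)); last by move=> y; rewrite mulrC.
by rewrite E_cmul // mulrC.
Qed.

Lemma sum_filter_rcons (F : Y -> R) t y x :
  \sum_(y' <- rcons t y | (r y' < r x)%R) F y' =
  \sum_(y' <- t | (r y' < r x)%R) F y' + ind y x * F y.
Proof.
rewrite big_rcons /ind; case: (r y < r x)%R => /=; first by rewrite mul1r.
by rewrite mul0r addr0.
Qed.

Definition K (chi : Y -> R) (w : Y) := E (fun z => ind w z * chi z).

Lemma bm_K chi : good chi -> bm (K chi).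
Proof. move=> gc; exact: (partial_bm pm_ind gc). Qed.

Definition F2 (psi : Y -> nat -> R) (chi : Y -> R) (u : seq Y) : R :=
  \sum_(x <- u) (\sum_(y <- u | (r y < r x)%R) psi y (below r u y)) * chi x.

Definition C2 (psi : Y -> nat -> R) (chi : Y -> R) (t : seq Y) (m : nat) : R :=
    \sum_(x <- t) (\sum_(y <- t | (r y < r x)%R) G psi t m y 0%N) * chi x
  + m%:R * \sum_(x <- t) E (fun z => ind z x * G psi t m.-1 z 0%N) * chi x
  + m%:R * \sum_(y <- t) G psi t m.-1 y 0%N * K chi y
  + (m * m.-1)%:R * E (fun w => K chi w * G psi t m.-2 w 0%N).

Lemma blockA psi chi t m y :
  \sum_(x <- rcons t y) (\sum_(y' <- rcons t y | (r y' < r x)%R) G psi (rcons t y) m y' 0%N) * chi x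
  = \sum_(x <- t) (\sum_(y' <- t | (r y' < r x)%R) G psi t m y' ((r y < r y')%R : bool)) * chi x
  + \sum_(x <- t) ind y x * G psi t m y 0%N * chi x
  + \sum_(y' <- t) ind y' y * G psi t m y' 0%N * chi y.
Proof.
rewrite big_rcons /= sum_filter_rcons (_ : ind y y = 0) ?mul0r ?addr0; last by rewrite /ind ltxx.
under eq_bigr do rewrite sum_filter_rcons mulrDl.
rewrite big_split /=; congr (_ + _ + _).
- apply: eq_bigr => x _; congr (_ * _); apply: eq_bigr => y' _; by rewrite G_rcons addn0.
- by apply: eq_bigr => x _; rewrite G_rcons ltxx.
- rewrite big_distrl /= big_mkcond /=; apply: eq_bigr => y' _.
  rewrite /ind G_rcons; case: (ltgtP (r y') (r y)) => h /=; rewrite ?mul1r ?mul0r //.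
Qed.

Lemma blockB psi chi t m y :
  \sum_(x <- rcons t y) E (fun z => ind z x * G psi (rcons t y) m z 0%N) * chi x
  = \sum_(x <- t) E (fun z => ind z x * G psi t m z ((r y < r z)%R : bool)) * chi x
  + E (fun z => ind z y * G psi t m z 0%N) * chi y.
Proof.
rewrite big_rcons /=; congr (_ + _).
  apply: eq_bigr => x _; congr (_ * _); apply: E_ext => z; by rewrite G_rcons addn0.
congr (_ * _); apply: E_ext => z.
rewrite /ind G_rcons; case: (ltgtP (r z) (r y)) => h /=; rewrite ?mul1r ?mul0r //.
Qed.

Lemma blockC psi chi t m y :
  \sum_(y' <- rcons t y) G psi (rcons t y) m y' 0%N * K chi y'
  = \sum_(y' <- t) G psi t m y' ((r y < r y')%R : bool) * K chi y'
  + G psi t m y 0%N * K chi y.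
Proof.
rewrite big_rcons /=; congr (_ + _).
  by apply: eq_bigr => x _; rewrite G_rcons addn0.
by rewrite G_rcons ltxx.
Qed.

Lemma blockD psi chi t m y :
  E (fun w => K chi w * G psi (rcons t y) m w 0%N)
  = E (fun w => K chi w * G psi t m w ((r y < r w)%R : bool)).
Proof. by apply: E_ext => w; rewrite G_rcons addn0. Qed.

Lemma bm_sumP (I : Type) (s : seq I) (Pr : pred I) (F : I -> Y -> R) :
  (forall i, bm (F i)) -> bm (fun y => \sum_(i <- s | Pr i) F i y).
Proof.
move=> hF; under [X in bm X]eq_fun do rewrite -big_filter; exact: bm_sum.
Qed.

Lemma E_sumP (I : Type) (s : seq I) (Pr : pred I) (F : I -> Y -> R) :
  (forall i, good (F i)) ->
  E (fun y => \sum_(i <- s | Pr i) F i y) = \sum_(i <- s | Pr i) E (F i).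
Proof.
move=> hF; under E_ext do rewrite -big_filter; by rewrite E_sum // big_filter.
Qed.

Lemma closed2 (psi : Y -> nat -> R) (chi : Y -> R) :
  (forall c, bm (psi^~ c)) -> good chi ->
  forall m t, iidE mu P m (fun s => F2 psi chi (t ++ s)) = C2 psi chi t m.
Proof.
move=> bp gc; have gp : forall c, good (psi^~ c) by move=> c; exact: bm_good.
have bK := bm_K gc.
elim=> [|m IH] t.
  rewrite /= cats0 /F2 /C2 !mul0r !addr0; apply: eq_bigr => x _; congr (_ * _).
  by apply: eq_bigr => y _; rewrite /G /= !addn0.
rewrite /=.
rewrite (E_ext (g := fun y => C2 psi chi (rcons t y) m)); last first.
  by move=> y; rewrite -IH; congr iidE; apply/funext => s; rewrite cat_rcons.
pose a1 y := \sum_(x <- t) (\sum_(y' <- t | (r y' < r x)%R) G psi t m y' ((r y < r y')%R : bool)) * chi x.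
pose a2 y := \sum_(x <- t) ind y x * G psi t m y 0%N * chi x.
pose a3 y := \sum_(y' <- t) ind y' y * G psi t m y' 0%N * chi y.
pose b1 y := \sum_(x <- t) E (fun z => ind z x * G psi t m.-1 z ((r y < r z)%R : bool)) * chi x.
pose b2 y := E (fun z => ind z y * G psi t m.-1 z 0%N) * chi y.
pose c1 y := \sum_(y' <- t) G psi t m.-1 y' ((r y < r y')%R : bool) * K chi y'.
pose c2 y := G psi t m.-1 y 0%N * K chi y.
pose dd y := E (fun w => K chi w * G psi t m.-2 w ((r y < r w)%R : bool)).
have eD : forall y, C2 psi chi (rcons t y) m =
   a1 y + a2 y + a3 y + m%:R * (b1 y + b2 y) + m%:R * (c1 y + c2 y)
   + (m * m.-1)%:R * dd y.
  by move=> y; rewrite /C2 blockA blockB blockC blockD.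
have ga1 : bm a1.
  apply: bm_sum => x; apply: bm_mul; last exact: bm_cst.
  apply: bm_sumP => y'; exact: bm_GV.
have ga2 : bm a2.
  apply: bm_sum => x; apply: bm_mul; last exact: bm_cst.
  apply: bm_mul; [exact: bm_ind1|exact: bm_G].
have ga3 : good a3.
  apply: good_sum => y'.
  apply: (good_bmul _ gc); apply: bm_mul; [exact: bm_ind2|exact: bm_cst].
have hsw1 : forall x, bm (fun y => E (fun z => ind z x * G psi t m.-1 z ((r y < r z)%R : bool))) /\
     E (fun y => E (fun z => ind z x * G psi t m.-1 z ((r y < r z)%R : bool))) =
     E (fun z => ind z x * G psi t m.-1.+1 z 0%N).
  by move=> x; apply: EG_swap => //; exact: bm_ind1.
have gb1 : bm b1.
  apply: bm_sum => x; apply: bm_mul; last exact: bm_cst.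
  exact: (hsw1 x).1.
have bpart : bm (fun y => E (fun z => ind z y * G psi t m.-1 z 0%N)).
  exact: (partial_bm pm_indT (good_G _ _ _ gp)).
have gb2 : good b2 by apply: (good_bmul bpart gc).
have gc1 : bm c1.
  apply: bm_sum => y'; apply: bm_mul; [exact: bm_GV|exact: bm_cst].
have gc2 : bm c2 by apply: bm_mul => //; exact: bm_G.
have hswd := EG_swap t m.-2 bK gp.
have gd : bm dd by exact: hswd.1.
have gB : good (fun y => m%:R * (b1 y + b2 y)).
  exact: good_cmul (good_add (bm_good gb1) gb2).
have gC : good (fun y => m%:R * (c1 y + c2 y)).
  exact: good_cmul (good_add (bm_good gc1) (bm_good gc2)).
have gD : good (fun y => (m * m.-1)%:R * dd y) by exact: good_cmul (bm_good gd).
have g12 : good (fun y => a1 y + a2 y) by exact: good_add (bm_good ga1) (bm_good ga2).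
have g123 : good (fun y => a1 y + a2 y + a3 y) by exact: good_add g12 ga3.
have g1234 : good (fun y => a1 y + a2 y + a3 y + m%:R * (b1 y + b2 y)) by exact: good_add g123 gB.
have g12345 : good (fun y => a1 y + a2 y + a3 y + m%:R * (b1 y + b2 y) + m%:R * (c1 y + c2 y)).
  exact: good_add g1234 gC.
rewrite (E_ext eD) (E_add g12345 gD) (E_add g1234 gC) (E_add g123 gB) (E_add g12 ga3).
rewrite (E_add (bm_good ga1) (bm_good ga2)).
rewrite (E_cmul _ (good_add (bm_good gb1) gb2)) (E_cmul _ (good_add (bm_good gc1) (bm_good gc2))).
rewrite (E_cmul _ (bm_good gd)).
rewrite (E_add (bm_good gb1) gb2) (E_add (bm_good gc1) (bm_good gc2)).
have eA1 : E a1 = \sum_(x <- t) (\sum_(y' <- t | (r y' < r x)%R) G psi t m.+1 y' 0%N) * chi x.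
  rewrite /a1 E_sum; last first.
    move=> x; apply: bm_good; apply: bm_mul; last exact: bm_cst.
    apply: bm_sumP => y'; exact: bm_GV.
  apply: eq_bigr => x _; rewrite E_mulr; last first.
    apply: bm_good; apply: bm_sumP => y'; exact: bm_GV.
  congr (_ * _); rewrite E_sumP; last by move=> y'; apply: bm_good; exact: bm_GV.
  by apply: eq_bigr => y' _; rewrite EG_ind.
have eA2 : E a2 = \sum_(x <- t) E (fun z => ind z x * G psi t m z 0%N) * chi x.
  rewrite /a2 E_sum; last first.
    move=> x; apply: bm_good; apply: bm_mul; last exact: bm_cst.
    apply: bm_mul; [exact: bm_ind1|exact: bm_G].
  apply: eq_bigr => x _; rewrite E_mulr //.
  apply: bm_good; apply: bm_mul; [exact: bm_ind1|exact: bm_G].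
have eA3 : E a3 = \sum_(y' <- t) G psi t m y' 0%N * K chi y'.
  rewrite /a3 E_sum; last first.
    move=> y'; apply: (good_bmul _ gc); apply: bm_mul; [exact: bm_ind2|exact: bm_cst].
  apply: eq_bigr => y' _.
  rewrite (E_ext (g := fun y => G psi t m y' 0%N * (ind y' y * chi y))); last first.
    by move=> y; ring.
  rewrite E_cmul //; exact: (good_bmul (bm_ind2 y') gc).
have eB1 : E b1 = \sum_(x <- t) E (fun z => ind z x * G psi t m.-1.+1 z 0%N) * chi x.
  rewrite /b1 E_sum; last first.
    move=> x; apply: bm_good; apply: bm_mul; last exact: bm_cst.
    exact: (hsw1 x).1.
  apply: eq_bigr => x _; rewrite E_mulr; last exact/bm_good/(hsw1 x).1.
  by rewrite (hsw1 x).2.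
have eB2 : E b2 = E (fun z => K chi z * G psi t m.-1 z 0%N).
  rewrite /b2 (E_ext (g := fun y => chi y * E (fun z => (fun a b => ind b a) y z * G psi t m.-1 z 0%N))); last first.
    by move=> y; rewrite mulrC.
  rewrite (swap pm_indT (good_G _ _ _ gp) gc).
  by apply: E_ext => z; rewrite mulrC.
have eC1 : E c1 = \sum_(y' <- t) G psi t m.-1.+1 y' 0%N * K chi y'.
  rewrite /c1 E_sum; last first.
    by move=> y'; apply: bm_good; apply: bm_mul; [exact: bm_GV|exact: bm_cst].
  apply: eq_bigr => y' _; rewrite E_mulr; last exact/bm_good/bm_GV.
  by rewrite EG_ind.
have eC2 : E c2 = E (fun z => K chi z * G psi t m.-1 z 0%N).
  by apply: E_ext => z; rewrite /c2 mulrC.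
have eDd : E dd = E (fun z => K chi z * G psi t m.-2.+1 z 0%N) by exact: hswd.2.
rewrite eA1 eA2 eA3 eB1 eB2 eC1 eC2 eDd /C2 /=.
clear gB gC gD g12 g123 g1234 g12345 eA1 eA2 eA3 eB1 eB2 eC1 eC2 eDd eD ga1 ga2 ga3 gb1 gb2 gc1 gc2 gd hswd hsw1 bpart IH a1 a2 a3 b1 b2 c1 c2 dd.
by case: m => [|[|m]] /=; ring.
Qed.

Lemma good_C1rc (phi : Y -> nat -> R) t m : (forall c, good (phi^~ c)) ->
  good (fun y => C1 phi (rcons t y) m).
Proof.
move=> gphi.
pose A y := \sum_(x <- t) Bin m (q x)
   (fun c => phi x (below r t x + (((r y < r x)%R : nat) + c))%N).
pose B y := Bin m (q y) (fun c => phi y (below r t y + c)%N).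
pose Cf y := E (fun z => Bin m.-1 (q z)
   (fun c => phi z (below r t z + (((r y < r z)%R : nat) + c))%N)).
have eA : forall y, C1 phi (rcons t y) m = A y + B y + m%:R * Cf y.
  move=> y; rewrite /C1 big_rcons /=; congr (_ + _ + _).
  - by apply: eq_bigr => x _; apply: Bin_ext => c; rewrite below_rcons addnA.
  - by apply: Bin_ext => c; rewrite below_rcons ltxx addn0.
  - congr (_ * _); apply: E_ext => z; apply: Bin_ext => c.
    by rewrite below_rcons addnA.
have gB : good B.
  apply: good_Bin; first exact: bm_q.
  move=> c; exact: (good_bt t (F := phi) gphi c).
have bA : bm A.
  apply: bm_sum => x; exact: (bm_V x (fun b => Bin m (q x)
   (fun c => phi x (below r t x + (b + c))%N))).
have [bC _] := E_Bin_swap m.-1 t gphi.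
under [X in good X]eq_fun do rewrite eA.
apply: good_add; first exact: good_add (bm_good bA) gB.
exact/bm_good/bm_cmul.
Qed.

Lemma good_C2rc (psi : Y -> nat -> R) (chi : Y -> R) t m :
  (forall c, bm (psi^~ c)) -> good chi ->
  good (fun y => C2 psi chi (rcons t y) m).
Proof.
move=> bp gc; have gp : forall c, good (psi^~ c) by move=> c; exact: bm_good.
have bK := bm_K gc.
pose a1 y := \sum_(x <- t) (\sum_(y' <- t | (r y' < r x)%R) G psi t m y' ((r y < r y')%R : bool)) * chi x.
pose a2 y := \sum_(x <- t) ind y x * G psi t m y 0%N * chi x.
pose a3 y := \sum_(y' <- t) ind y' y * G psi t m y' 0%N * chi y.
pose b1 y := \sum_(x <- t) E (fun z => ind z x * G psi t m.-1 z ((r y < r z)%R : bool)) * chi x.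
pose b2 y := E (fun z => ind z y * G psi t m.-1 z 0%N) * chi y.
pose c1 y := \sum_(y' <- t) G psi t m.-1 y' ((r y < r y')%R : bool) * K chi y'.
pose c2 y := G psi t m.-1 y 0%N * K chi y.
pose dd y := E (fun w => K chi w * G psi t m.-2 w ((r y < r w)%R : bool)).
have eD : forall y, C2 psi chi (rcons t y) m =
   a1 y + a2 y + a3 y + m%:R * (b1 y + b2 y) + m%:R * (c1 y + c2 y)
   + (m * m.-1)%:R * dd y.
  by move=> y; rewrite /C2 blockA blockB blockC blockD.
have ga1 : bm a1.
  apply: bm_sum => x; apply: bm_mul; last exact: bm_cst.
  apply: bm_sumP => y'; exact: bm_GV.
have ga2 : bm a2.
  apply: bm_sum => x; apply: bm_mul; last exact: bm_cst.
  apply: bm_mul; [exact: bm_ind1|exact: bm_G].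
have ga3 : good a3.
  apply: good_sum => y'.
  apply: (good_bmul _ gc); apply: bm_mul; [exact: bm_ind2|exact: bm_cst].
have hsw1 : forall x, bm (fun y => E (fun z => ind z x * G psi t m.-1 z ((r y < r z)%R : bool))).
  by move=> x; apply: (EG_swap _ _ (bm_ind1 x) gp).1.
have gb1 : bm b1.
  apply: bm_sum => x; apply: bm_mul; last exact: bm_cst.
  exact: hsw1.
have bpart : bm (fun y => E (fun z => ind z y * G psi t m.-1 z 0%N)).
  exact: (partial_bm pm_indT (good_G _ _ _ gp)).
have gb2 : good b2 by apply: (good_bmul bpart gc).
have gc1 : bm c1.
  apply: bm_sum => y'; apply: bm_mul; [exact: bm_GV|exact: bm_cst].
have gc2 : bm c2 by apply: bm_mul => //; exact: bm_G.
have gd : bm dd by exact: (EG_swap t m.-2 bK gp).1.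
under [X in good X]eq_fun do rewrite eD.
apply: good_add; last exact: good_cmul (bm_good gd).
apply: good_add; last exact: good_cmul (good_add (bm_good gc1) (bm_good gc2)).
apply: good_add; last exact: good_cmul (good_add (bm_good gb1) gb2).
apply: good_add => //; exact: good_add (bm_good ga1) (bm_good ga2).
Qed.

Lemma closed12 (phi psi : Y -> nat -> R) (chi : Y -> R) (a b : R) :
  (forall c, good (phi^~ c)) -> (forall c, bm (psi^~ c)) -> good chi ->
  forall m t, iidE mu P m (fun s => a * F1 phi (t ++ s) + b * F2 psi chi (t ++ s)) =
     a * C1 phi t m + b * C2 psi chi t m.
Proof.
move=> gphi bpsi gchi; elim=> [|m IH] t.
  by rewrite /= -(closed1 gphi 0 t) -(closed2 bpsi gchi 0 t).
rewrite /=.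
rewrite (E_ext (g := fun y => a * C1 phi (rcons t y) m + b * C2 psi chi (rcons t y) m)); last first.
  by move=> y; rewrite -IH; congr iidE; apply/funext => s; rewrite cat_rcons.
rewrite E_add; [|exact: good_cmul (good_C1rc _ _ gphi)|exact: good_cmul (good_C2rc _ _ bpsi gchi)].
rewrite !E_cmul; [|exact: good_C2rc|exact: good_C1rc].
rewrite -(closed1 gphi m.+1 t) -(closed2 bpsi gchi m.+1 t) /=.
congr (a * _ + b * _); apply: E_ext => y.
  by rewrite -(closed1 gphi m (rcons t y)); congr iidE; apply/funext => s; rewrite cat_rcons.
by rewrite -(closed2 bpsi gchi m (rcons t y)); congr iidE; apply/funext => s; rewrite cat_rcons.
Qed.

Hypothesis noatom : forall v : R, (\int[mu]_(y in [set y | r y = v]) (P y)%:E = 0)%E.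

Lemma E_eq0 y : E (fun z => ((r z == r y : bool) : nat)%:R) = 0.
Proof.
rewrite /Ep /Rintegral.
have -> : (\int[mu]_z (P z * ((r z == r y : bool) : nat)%:R)%:E =
    \int[mu]_(z in [set z | r z = r y]) (P z)%:E)%E.
  rewrite [RHS]integral_mkcond; apply: eq_integral => z _; rewrite patchE.
  case: (eqVneq (r z) (r y)) => h.
    by rewrite mem_set //= mulr1.
  rewrite mulr0; case: ifPn => // /set_mem /= e.
  by rewrite e eqxx in h.
by rewrite noatom.
Qed.

Lemma Ple_q y : Ple mu P r y = q y.
Proof.
rewrite /Ple (E_ext (g := fun z => ind z y + ((r z == r y : bool) : nat)%:R)); last first.
  move=> z; rewrite /ind; case: (ltgtP (r z) (r y)) => h /=; rewrite ?addr0 ?add0r //.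
rewrite E_add; [|exact/bm_good/bm_ind1|].
  by rewrite E_eq0 addr0.
apply/bm_good; split; last by exists 1 => z; case: (r z == r y); rewrite ?normr1 ?normr0.
by apply: bnat_meas; apply: measurable_fun_eqr.
Qed.

Lemma bm_exp f j : bm f -> bm (fun y => f y ^+ j).
Proof.
move=> bf; elim: j => [|j IH]; first by under [X in bm X]eq_fun do rewrite expr0; exact: bm_cst.
under [X in bm X]eq_fun do rewrite exprS; exact: bm_mul.
Qed.

Variables (sc : Y -> R) (n k : nat).
Hypothesis gsc : good sc.
Hypothesis br : exists B, forall y, `|r y| <= B.
Hypothesis k2 : (2 <= k)%N.
Hypothesis kn : (k <= n)%N.

Let bmr : bm r. Proof. by split. Qed.

Definition phi1 (z : Y) (c : nat) : R :=
  (n%:R)^-1 * (r z * ('C(c, k - 1))%:R / ('C(n - 1, k - 1))%:R * sc z).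

Definition psi2 (z : Y) (c : nat) : R :=
  (n%:R)^-1 * ((k - 1)%:R / (n - 1)%:R) * (r z * ('C(c, k - 2))%:R / ('C(n - 2, k - 2))%:R).

Lemma good_phi1 c : good (phi1^~ c).
Proof.
rewrite /phi1; under [X in good X]eq_fun do rewrite mulrA.
apply: good_bmul gsc; apply: bm_cmul.
under [X in bm X]eq_fun do rewrite -mulrA; apply: bm_mul bmr (bm_cst _).
Qed.

Lemma bm_psi2 c : bm (psi2^~ c).
Proof.
rewrite /psi2; apply: bm_cmul.
under [X in bm X]eq_fun do rewrite -mulrA; apply: bm_mul bmr (bm_cst _).
Qed.

Lemma n0 : (n%:R : R) != 0.
Proof. by rewrite pnatr_eq0 -lt0n (leq_trans _ kn) // (leq_trans _ k2). Qed.

Lemma Cn1 : (('C(n - 1, k - 1))%:R : R) != 0.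
Proof. by rewrite pnatr_eq0 -lt0n bin_gt0 leq_sub2r. Qed.

Lemma Cn2 : (('C(n - 2, k - 2))%:R : R) != 0.
Proof. by rewrite pnatr_eq0 -lt0n bin_gt0 leq_sub2r. Qed.

Lemma nm1 : ((n - 1)%:R : R) != 0.
Proof. by rewrite pnatr_eq0 subn_eq0 -ltnNge (leq_trans _ kn). Qed.

Lemma term1E s : term1 r sc n k s = F1 phi1 s.
Proof. by rewrite /term1 /F1 big_distrr. Qed.

Lemma term2E s : term2 r sc n k s = F2 psi2 sc s.
Proof.
rewrite /term2 /F2 big_distrr; apply: eq_bigr => x _ /=.
rewrite /psi2 -big_distrr /=; ring.
Qed.

Lemma GhatE s : Ghat r sc n k s = k%:R * F1 phi1 s + (- k%:R) * F2 psi2 sc s.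
Proof.
rewrite -term1E -term2E /Ghat /term1 /term2.
under eq_bigr do rewrite mulrBl.
rewrite sumrB; ring.
Qed.

Lemma C1val : C1 phi1 [::] n = E (fun y => r y * Ple mu P r y ^+ (k - 1) * sc y).
Proof.
rewrite /C1 big_nil add0r.
rewrite (E_ext (g := fun z => (n%:R)^-1 * (r z * Ple mu P r z ^+ (k - 1) * sc z))); last first.
  move=> z; rewrite Ple_q.
  rewrite (@Bin_ext _ _ _ (fun c => ((n%:R)^-1 * (r z / ('C(n - 1, k - 1))%:R * sc z)) * ('C(c, k - 1))%:R)); last first.
    by move=> c; rewrite /phi1 /=; ring.
  rewrite Bin_scale Bin_moment -subn1.
  by field; rewrite n0 Cn1.
rewrite E_cmul; first by rewrite mulrA mulfV ?n0 // mul1r.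
apply: good_bmul gsc; apply: bm_mul bmr _; apply: bm_exp.
have -> : Ple mu P r = q by apply/funext => y; exact: Ple_q.
exact: bm_q.
Qed.

Lemma bm_qk j : bm (fun w => r w * q w ^+ j).
Proof. apply: bm_mul bmr _; apply: bm_exp; exact: bm_q. Qed.

Lemma gfunE y : gfun mu P r k y = E (fun a => ind a y * (r a * q a ^+ (k - 2))).
Proof. by apply: E_ext => a; rewrite Ple_q /ind; ring. Qed.

Lemma C2val : C2 psi2 sc [::] n = E (fun y => (k - 1)%:R * gfun mu P r k y * sc y).
Proof.
rewrite /C2 !big_nil !mulr0 !add0r.
rewrite (E_ext (g := fun w => ((n%:R)^-1 * ((k - 1)%:R / (n - 1)%:R)) *
    ((r w * q w ^+ (k - 2)) * K sc w))); last first.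
  move=> w; rewrite /G.
  rewrite (@Bin_ext _ _ _ (fun c => ((n%:R)^-1 * ((k - 1)%:R / (n - 1)%:R) *
      (r w / ('C(n - 2, k - 2))%:R)) * ('C(c, k - 2))%:R)); last first.
    by move=> c; rewrite /psi2 /=; ring.
  rewrite Bin_scale Bin_moment -subn2.
  by field; rewrite Cn2 nm1 n0.
rewrite E_cmul; last by apply: good_bmul (bm_qk _) _; exact/bm_good/bm_K.
rewrite /K (swap pm_ind gsc (bm_good (bm_qk (k - 2)))).
rewrite [RHS](E_ext (g := fun y => (k - 1)%:R * (gfun mu P r k y * sc y))); last first.
  by move=> y; rewrite mulrA.
rewrite E_cmul; last first.
  apply: good_bmul gsc.
  have -> : gfun mu P r k = fun y => E (fun a => ind a y * (r a * q a ^+ (k - 2))) by apply/funext => y; exact: gfunE.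
  exact: (partial_bm pm_indT (bm_good (bm_qk _))).
rewrite mulrA (_ : (n * n.-1)%:R * _ = (k - 1)%:R); last first.
  by rewrite natrM -subn1; field; rewrite n0 nm1.
congr (_ * _); apply: E_ext => y; rewrite gfunE mulrC.
by congr (_ * _); apply: E_ext => a; ring.
Qed.

Lemma main_inner :
  iidE mu P n (term1 r sc n k) = E (fun y => r y * Ple mu P r y ^+ (k - 1) * sc y)
  /\ iidE mu P n (term2 r sc n k) = E (fun y => (k - 1)%:R * gfun mu P r k y * sc y)
  /\ iidE mu P n (Ghat r sc n k) = k%:R * E (fun y =>
        (r y * Ple mu P r y ^+ (k - 1) - (k - 1)%:R * gfun mu P r k y) * sc y).
Proof.
have e1 : iidE mu P n (term1 r sc n k) = C1 phi1 [::] n.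
  rewrite -(closed1 good_phi1 n [::]); congr iidE; apply/funext => s; by rewrite term1E.
have e2 : iidE mu P n (term2 r sc n k) = C2 psi2 sc [::] n.
  rewrite -(closed2 bm_psi2 gsc n [::]); congr iidE; apply/funext => s; by rewrite term2E.
split; first by rewrite e1 C1val.
split; first by rewrite e2 C2val.
have e3 : iidE mu P n (Ghat r sc n k) =
    k%:R * C1 phi1 [::] n + (- k%:R) * C2 psi2 sc [::] n.
  rewrite -(closed12 (k%:R) (- k%:R) good_phi1 bm_psi2 gsc n [::]).
  by congr iidE; apply/funext => s; rewrite GhatE.
have hPle : Ple mu P r = q by apply/funext => y; exact: Ple_q.
have hg : gfun mu P r k = fun y => E (fun a => ind a y * (r a * q a ^+ (k - 2))).
  by apply/funext => y; exact: gfunE.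
have gA : good (fun y => r y * Ple mu P r y ^+ (k - 1) * sc y).
  by apply: good_bmul gsc; rewrite hPle; exact: bm_qk.
have gB : good (fun y => (k - 1)%:R * gfun mu P r k y * sc y).
  apply: good_bmul gsc; apply: bm_cmul; rewrite hg.
  exact: (partial_bm pm_indT (bm_good (bm_qk _))).
rewrite e3 C1val C2val.
rewrite [in RHS](E_ext (g := fun y => r y * Ple mu P r y ^+ (k - 1) * sc y +
   (-1) * ((k - 1)%:R * gfun mu P r k y * sc y))); last by move=> y; ring.
rewrite E_add //; last exact: good_cmul.
rewrite E_cmul //; ring.
Qed.

End Main.

Theorem mainTheorem2 (R : realType) (d : measure_display) (Y : measurableType d)
  (mu : {measure set Y -> \bar R}) (m : nat)
  (pi : 'rV[R]_m -> Y -> R) (theta : 'rV[R]_m) (rew : Y -> R) (n k : nat) :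
  sigma_finite setT mu ->
  (* pi_t is a probability density w.r.t. mu for every parameter t *)
  (forall t y, 0 <= pi t y) ->
  (forall t, measurable_fun setT (pi t)) ->
  (forall t, (\int[mu]_(y in setT) (pi t y)%:E = 1)%E) ->
  (* differentiable in theta *)
  (forall t y, differentiable (fun t' => pi t' y) t) ->
  (* bounded measurable reward *)
  measurable_fun setT rew ->
  (exists M : R, forall y, `|rew y| <= M) ->
  (* finiteness of the expectations involved: the score is measurable and integrable *)
  (forall j, measurable_fun setT (score pi theta j)) ->
  (forall j, mu.-integrable setT (fun y => (pi theta y * score pi theta j y)%:E)) ->
  (* the law of R(x,y) under pi_theta has no atoms *)
  (forall r : R, (\int[mu]_(y in [set y | rew y = r]) (pi theta y)%:E = 0)%E) ->
  (2 <= k)%N -> (k <= n)%N ->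
  forall j : 'I_m,
    iidE mu (pi theta) n (term1 rew (score pi theta j) n k)
      = Ep mu (pi theta) (fun y =>
          rew y * Ple mu (pi theta) rew y ^+ (k - 1) * score pi theta j y)
 /\ iidE mu (pi theta) n (term2 rew (score pi theta j) n k)
      = Ep mu (pi theta) (fun y =>
          (k - 1)%:R * gfun mu (pi theta) rew k y * score pi theta j y)
 /\ iidE mu (pi theta) n (Ghat rew (score pi theta j) n k)
      = k%:R * Ep mu (pi theta) (fun y =>
          (rew y * Ple mu (pi theta) rew y ^+ (k - 1)
           - (k - 1)%:R * gfun mu (pi theta) rew k y) * score pi theta j y).
Proof.
move=> hsf P0 mP P1 _ mr br msc isc noatom k2 kn j.
exact: (main_inner hsf (P0 theta) (mP theta) (P1 theta) mr noatom
  (conj (msc j) (isc j)) br k2 kn).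
Qed.
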